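(* Let $P$ be a finite poset, $I\in\mathcal{IC}(P)$, and let $x$ be a maximal element of $P$ or a minimal element of $P$. If $x\in I$, then $x\notin\mathrm{Row}(I)$.
   Context: All posets are finite. For a poset $P$, a subset $I\subseteq P$ is interval-closed if for all $x,y\in I$ and $z\in P$ with $x\le z\le y$ we have $z\in I$; $\mathcal{IC}(P)$ is the set of interval-closed subsets of $P$. For $x\in P$ the toggle $t_x:\mathcal{IC}(P)\to\mathcal{IC}(P)$ is defined by $t_x(I)=I\triangle\{x\}$ if $I\triangle\{x\}\in\mathcal{IC}(P)$ and $t_x(I)=I$ otherwise. Rowmotion is $\mathrm{Row}=t_{x_1}\circ t_{x_2}\circ\cdots\circ t_{x_N}:\mathcal{IC}(P)\to\mathcal{IC}(P)$, where $(x_1,\dots,x_N)$ is a linear extension of $P$ (so elements are toggled from the top of the poset down); this does not depend on the choice of linear extension. *)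

(* Defs.v *)
From mathcomp Require Import all_boot all_order.
Set Implicit Arguments. Unset Strict Implicit. Unset Printing Implicit Defensive.
Import Order.Theory.
Local Open Scope order_scope.

Section IC.
Context {d : Order.disp_t} {P : finPOrderType d}.

Definition interval_closed (I : {set P}) : bool :=
  [forall x, forall y, forall z,
     [&& x \in I, y \in I, x <= z & z <= y] ==> (z \in I)].

Definition toggle (x : P) (I : {set P}) : {set P} :=
  let J := if x \in I then I :\ x else x |: I in
  if interval_closed J then J else I.

Definition linear_extension (s : seq P) : Prop :=
  [/\ uniq s, forall x : P, x \in s &
      forall x y : P, x < y -> index x s < (index y s)%N].

(* Row = t_{x_1} o t_{x_2} o ... o t_{x_N}  (t_{x_N} applied first) *)
Definition rowmotion (s : seq P) (I : {set P}) : {set P} :=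
  foldr toggle I s.

Definition maximal (x : P) : Prop := forall y : P, ~~ (x < y).
Definition minimal (x : P) : Prop := forall y : P, ~~ (y < x).
End IC.

(* Main.v *)
Require Import Defs.
From mathcomp Require Import all_boot all_order.
Import Order.Theory.
Local Open Scope order_scope.

Section H.
Context {d : Order.disp_t} {P : finPOrderType d}.

Lemma toggle_IC (y : P) J : interval_closed J -> interval_closed (toggle y J).
Proof. by rewrite /toggle; case: ifP. Qed.

Lemma foldr_IC (s : seq P) J : interval_closed J -> interval_closed (foldr toggle J s).
Proof. by elim: s => //= a s IH H; apply: toggle_IC; apply: IH. Qed.

Lemma toggle_other (x y : P) J : y != x -> (x \in toggle y J) = (x \in J).
Proof.
move=> ne; rewrite /toggle; case: (y \in J); case: ifP => _ //.
  by rewrite in_setD1 eq_sym ne.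
by rewrite in_setU1 eq_sym (negbTE ne).
Qed.

Lemma foldr_notin (x : P) s J : x \notin s -> (x \in foldr toggle J s) = (x \in J).
Proof.
elim: s => //= a s IH; rewrite in_cons negb_or => /andP[ne ns].
by rewrite toggle_other ?(eq_sym a) // IH.
Qed.

Lemma toggle_ext (x : P) J : interval_closed J -> (maximal x \/ minimal x) ->
  x \in J -> x \notin toggle x J.
Proof.
move=> IC ext xJ; rewrite /toggle xJ.
suff -> : interval_closed (J :\ x) by rewrite setD11.
apply/forallP => a; apply/forallP => b; apply/forallP => z; apply/implyP.
case/and4P; rewrite !in_setD1 => /andP[na aJ] /andP[nb bJ] az zb.
have zJ : z \in J.
  by move/forallP: IC => /(_ a)/forallP/(_ b)/forallP/(_ z); rewrite aJ bJ az zb.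
rewrite zJ andbT; apply/eqP => ez; subst z.
case: ext => [m|m].
  by move: (m b); rewrite lt_def nb zb.
by move: (m a); rewrite lt_def eq_sym na az.
Qed.
End H.

Theorem lemma2p13 (d : Order.disp_t) (P : finPOrderType d) (s : seq P)
  (I : {set P}) (x : P) :
  linear_extension s -> interval_closed I ->
  maximal x \/ minimal x ->
  x \in I -> x \notin rowmotion s I.
Proof.
case=> us xs _ IC ext xI; rewrite /rowmotion.
have := xs x; case/splitPr: (xs x) us => s1 s2.
rewrite cat_uniq /= => /and3P[_ h1 /andP[x2 _]] _.
rewrite foldr_cat /= foldr_notin; last first.
  by by apply: contra h1 => xs1; rewrite xs1.
apply: toggle_ext => //; first exact: foldr_IC.
by rewrite foldr_notin.
Qed.
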